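(* Let $m,K$ be positive integers and $b_1,\dots,b_{3m}$ positive integers with $K/4<b_i<K/2$ and $\sum_i b_i=mK$. Set $W=100(5m)^2K$, $a_i=b_i+W$, $L=3W+K$, $\epsilon=1/(400(5m)^2)$, $h=\lfloor 4\epsilon L\rfloor$, $H=L+h$. Let $X$ be the multiset consisting of $a_1,\dots,a_{3m}$, $m$ copies of $-H$ and $m$ copies of $h$, and let $T_{\min}$ be a minimum-cost addition tree over $X$. For every node $z$ of $T_{\min}$ (identified with its value): (1) if $z<0$ then $|z|\le H$; (2) if $z>0$ then $z<H$.
   Context: An addition tree over a multiset $X$ is a full binary tree whose leaves are labeled by the elements of $X$ (each used once), each internal node having value equal to the sum of its children's values; its cost is the sum of the absolute values of the values of its internal nodes, and $T_{\min}$ is an addition tree over $X$ of minimum cost. *)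

(* Defs.v *)
From mathcomp Require Import all_boot all_order all_algebra.
Set Implicit Arguments. Unset Strict Implicit. Unset Printing Implicit Defensive.
Import Order.TTheory GRing.Theory Num.Theory.
Local Open Scope ring_scope.

Inductive atree : Type :=
| ALeaf of int
| ANode of atree & atree.

Fixpoint leaves (t : atree) : seq int :=
  match t with ALeaf x => [:: x] | ANode l r => leaves l ++ leaves r end.

Fixpoint tval (t : atree) : int :=
  match t with ALeaf x => x | ANode l r => tval l + tval r end.

Fixpoint tcost (t : atree) : int :=
  match t with ALeaf _ => 0 | ANode l r => `|tval l + tval r| + tcost l + tcost r end.

Fixpoint node_vals (t : atree) : seq int :=
  match t with ALeaf x => [:: x] | ANode l r => (tval l + tval r) :: node_vals l ++ node_vals r end.

Definition addition_tree_over (X : seq int) (t : atree) : Prop :=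
  perm_eq (leaves t) X.

Definition min_addition_tree (X : seq int) (t : atree) : Prop :=
  addition_tree_over X t /\
  forall t', addition_tree_over X t' -> tcost t <= tcost t'.

(* Main.v *)
From Pilot Require Import Defs.
From mathcomp Require Import all_boot all_order all_algebra zify.
Import Order.TTheory GRing.Theory Num.Theory.
Import Pilot.Defs.
Local Open Scope ring_scope.

Definition key (z : int) : nat := if 0 < z then (2 * `|z| + 1)%N else (2 * `|z|)%N.

Lemma ar (x y s : int) (k : nat) : key (x+y) = k -> (key x < k)%N -> (key y < k)%N -> (key s <= k)%N ->
  (key (x+y+s) <= k)%N -> `|x+y| <= `|y+s| -> `|x+y| <= `|x+s| -> False.
Proof. rewrite /key. case: ifP; case: ifP; case: ifP; case: ifP; case: ifP; lia. Qed.

Inductive sub : atree -> atree -> Prop :=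
| sub_refl t : sub t t
| sub_l P l r : sub P l -> sub P (ANode l r)
| sub_r P l r : sub P r -> sub P (ANode l r).

Lemma sub_replace P T : sub P T -> forall P', perm_eq (leaves P') (leaves P) -> tval P' = tval P ->
  exists T', [/\ perm_eq (leaves T') (leaves T), tval T' = tval T &
     tcost T' = tcost T - tcost P + tcost P'].
Proof.
elim=> [t|Q l r _ IH|Q l r _ IH] P' Hp Hv.
- exists P'; split => //; lia.
- have [l' [Hl1 Hl2 Hl3]] := IH P' Hp Hv.
  exists (ANode l' r); split => /=.
  + by rewrite perm_cat2r.
  + by rewrite Hl2.
  + rewrite Hl2 Hl3; lia.
- have [r' [Hl1 Hl2 Hl3]] := IH P' Hp Hv.
  exists (ANode l r'); split => /=.
  + by rewrite perm_cat2l.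
  + by rewrite Hl2.
  + rewrite Hl2 Hl3; lia.
Qed.

Lemma min_sub X T P P' : min_addition_tree X T -> sub P T ->
  perm_eq (leaves P') (leaves P) -> tval P' = tval P -> tcost P <= tcost P'.
Proof.
move=> [HX Hmin] Hs Hp Hv.
have [T' [H1 H2 H3]] := @sub_replace P T Hs P' Hp Hv.
have := Hmin T' (perm_trans H1 HX); rewrite H3; lia.
Qed.

Lemma rot X T A B S : min_addition_tree X T ->
  (sub (ANode (ANode A B) S) T \/ sub (ANode S (ANode A B)) T) ->
  `|tval A + tval B| <= `|tval B + tval S| /\ `|tval A + tval B| <= `|tval A + tval S|.
Proof.
move=> HT [] Hs.
- have h1 := @min_sub _ _ _ (ANode A (ANode B S)) HT Hs.
  have h2 := @min_sub _ _ _ (ANode B (ANode A S)) HT Hs.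
  move: h1 h2 => /=.
  have p1 : perm_eq (leaves A ++ leaves B ++ leaves S) ((leaves A ++ leaves B) ++ leaves S).
    by rewrite catA.
  have p2 : perm_eq (leaves B ++ leaves A ++ leaves S) ((leaves A ++ leaves B) ++ leaves S).
    by rewrite perm_catCA catA.
  move=> h1 h2; have := h1 p1; have := h2 p2.
  rewrite !addrA [tval B + tval A]addrC.
  move=> h3 h4; have := h3 erefl; have := h4 erefl; lia.
- have h1 := @min_sub _ _ _ (ANode A (ANode B S)) HT Hs.
  have h2 := @min_sub _ _ _ (ANode B (ANode A S)) HT Hs.
  move: h1 h2 => /=.
  have p1 : perm_eq (leaves A ++ leaves B ++ leaves S) (leaves S ++ leaves A ++ leaves B).
    by rewrite catA perm_catC.
  have p2 : perm_eq (leaves B ++ leaves A ++ leaves S) (leaves S ++ leaves A ++ leaves B).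
    by rewrite perm_catCA catA perm_catC.
  move=> h1 h2; have := h1 p1; have := h2 p2.
  rewrite !addrA [tval B + tval A]addrC [tval S + tval A]addrC [tval A + tval S + _]addrAC.
  move=> h3 h4; have := h3 erefl; have := h4 erefl; lia.
Qed.

Lemma tval_in t : tval t \in node_vals t.
Proof. by case: t => [x|l r] /=; rewrite inE eqxx. Qed.

Lemma sub_nodes P T : sub P T -> {subset node_vals P <= node_vals T}.
Proof.
elim=> [t|Q l r _ IH|Q l r _ IH] x // Hx /=; rewrite inE mem_cat (IH x Hx) ?orbT //.
Qed.

Lemma parent Q T : sub Q T -> Q = T \/ exists S, sub (ANode Q S) T \/ sub (ANode S Q) T.
Proof.
elim=> [t|P l r _ [->|[S [H|H]]]|P l r _ [->|[S [H|H]]]].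
- by left.
- by right; exists r; left; apply: sub_refl.
- by right; exists S; left; apply: sub_l.
- by right; exists S; right; apply: sub_l.
- by right; exists l; right; apply: sub_refl.
- by right; exists S; left; apply: sub_r.
- by right; exists S; right; apply: sub_r.
Qed.

Lemma find T k : (forall v, v \in node_vals T -> (key v <= k)%N) ->
  (exists2 v, v \in node_vals T & key v = k) ->
  (forall x, x \in leaves T -> (key x < k)%N) ->
  exists A B, [/\ sub (ANode A B) T, key (tval A + tval B) = k,
     (key (tval A) < k)%N & (key (tval B) < k)%N].
Proof.
elim: T => [x|l IHl r IHr] Hn [v Hv Hk] Hl.
- move: Hv; rewrite inE => /eqP Hv; subst v.
  by have := Hl x; rewrite inE eqxx Hk ltnn => /(_ isT).
- have Hnl : forall w, w \in node_vals l -> (key w <= k)%N.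
    by move=> w Hw; apply: Hn; rewrite /= inE mem_cat Hw orbT.
  have Hnr : forall w, w \in node_vals r -> (key w <= k)%N.
    by move=> w Hw; apply: Hn; rewrite /= inE mem_cat Hw !orbT.
  have Hll : forall x, x \in leaves l -> (key x < k)%N.
    by move=> x Hx; apply: Hl; rewrite /= mem_cat Hx.
  have Hlr : forall x, x \in leaves r -> (key x < k)%N.
    by move=> x Hx; apply: Hl; rewrite /= mem_cat Hx orbT.
  have recl : (exists2 v, v \in node_vals l & key v = k) -> exists A B, [/\ sub (ANode A B) (ANode l r), key (tval A + tval B) = k,
     (key (tval A) < k)%N & (key (tval B) < k)%N].
    move=> E; have [A [B [H1 H2 H3 H4]]] := IHl Hnl E Hll.
    by exists A, B; split => //; apply: sub_l.
  have recr : (exists2 v, v \in node_vals r & key v = k) -> exists A B, [/\ sub (ANode A B) (ANode l r), key (tval A + tval B) = k,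
     (key (tval A) < k)%N & (key (tval B) < k)%N].
    move=> E; have [A [B [H1 H2 H3 H4]]] := IHr Hnr E Hlr.
    by exists A, B; split => //; apply: sub_r.
  move: Hv; rewrite /= inE mem_cat => /orP [/eqP Hv|/orP [Hv|Hv]].
  + subst v.
    have al := Hnl _ (tval_in l); have ar := Hnr _ (tval_in r).
    case El: (key (tval l) == k); first by apply: recl; exists (tval l); rewrite ?tval_in ?(eqP El).
    case Er: (key (tval r) == k); first by apply: recr; exists (tval r); rewrite ?tval_in ?(eqP Er).
    exists l, r; split => //; first exact: sub_refl.
    * by rewrite ltn_neqAle El al.
    * by rewrite ltn_neqAle Er ar.
  + by apply: recl; exists v.
  + by apply: recr; exists v.
Qed.

Lemma exmax (s : seq int) (f : int -> nat) x0 : x0 \in s ->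
  exists2 v, v \in s & forall w, w \in s -> (f w <= f v)%N.
Proof.
elim: s x0 => [//|a s IH] x0 Hx.
case Hs: (x0 \in s).
- have [v Hv Hm] := IH _ Hs.
  case: (leqP (f a) (f v)) => Ha.
  + exists v; first by rewrite inE Hv orbT.
    by move=> w; rewrite inE => /orP [/eqP ->|/Hm].
  + exists a; first by rewrite inE eqxx.
    move=> w; rewrite inE => /orP [/eqP ->//|/Hm H]; lia.
- move: Hx; rewrite inE Hs orbF => /eqP <-.
  case: s IH Hs => [_ _|c s' IH Hs].
  + by exists x0; rewrite ?inE // => w; rewrite inE => /eqP ->.
  + have [v Hv Hm] := IH _ (mem_head c s').
    case: (leqP (f x0) (f v)) => Ha.
    * exists v; first by rewrite inE Hv orbT.
      by move=> w; rewrite inE => /orP [/eqP ->|/Hm].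
    * exists x0; first by rewrite inE eqxx.
      move=> w; rewrite inE => /orP [/eqP ->//|/Hm H]; lia.
Qed.

Lemma tval_sum t : tval t = \sum_(x <- leaves t) x.
Proof.
elim: t => [x|l IHl r IHr] /=; first by rewrite big_seq1.
by rewrite big_cat /= IHl IHr.
Qed.

Lemma sumnseq (n : nat) (c : int) : \sum_(x <- nseq n c) x = c * n%:Z.
Proof.
elim: n => [|n IH]; first by rewrite big_nil mulr0.
by rewrite /= big_cons IH; lia.
Qed.

Theorem lemma2p6 (m K : nat) (b : 'I_(3 * m) -> nat) (T : atree) :
  (0 < m)%N -> (0 < K)%N ->
  (forall i, 0 < b i)%N ->
  (forall i, K < 4 * b i /\ 2 * b i < K)%N ->
  (\sum_(i < 3 * m) b i = m * K)%N ->
  let W := (100 * (5 * m) ^ 2 * K)%N in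
  let L := (3 * W + K)%N in
  let h := ((4 * L) %/ (400 * (5 * m) ^ 2))%N in
  let H := (L + h)%N in
  let X := [seq ((b i + W)%N)%:Z | i <- enum 'I_(3 * m)]
           ++ nseq m (- (H%:Z)) ++ nseq m (h%:Z) in
  min_addition_tree X T ->
  forall z, z \in node_vals T ->
    (z < 0 -> `|z| <= H%:Z) /\ (0 < z -> z < H%:Z).
Proof.
move=> m0 K0 bpos bb bsum W L h H X HT z zin.
have HX := HT.1.
have Hsum : tval T = 0.
  rewrite tval_sum (perm_big _ HX) /X !big_cat /= !sumnseq big_map big_enum /=.
  rewrite -(big_morph Posz PoszD erefl) big_split /= sum_nat_const card_ord.
  rewrite bsum /H /L; nia.
have Hleaf : forall x, x \in leaves T -> (key x <= 2 * H)%N.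
  move=> x; rewrite (perm_mem HX) /X !mem_cat => /orP [/mapP [i _ ->]|/orP [/nseqP [-> _]|/nseqP [-> _]]].
  - have := bb i; rewrite /key /H /L; case: ifP; lia.
  - rewrite /key; case: ifP; lia.
  - rewrite /key /H /L; case: ifP; lia.
suff : (key z <= 2 * H)%N by rewrite /key; case: ifP; lia.
rewrite leqNgt; apply/negP => Hz.
have [v Hv Hm] := @exmax _ key _ zin.
have Hk : (2 * H < key v)%N by have := Hm _ zin; lia.
have [A [B [Hs H1 H2 H3]]] := @find T (key v) Hm (ex_intro2 _ _ v Hv erefl)
   (fun x Hx => leq_ltn_trans (Hleaf x Hx) Hk).
have [HQ|[S HP]] := @parent _ _ Hs.
  by move: Hsum H1 Hk; rewrite -HQ /= => ->; rewrite /key /=; lia.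
have [r1 r2] := @rot _ _ _ _ _ HT HP.
have HS : (key (tval S) <= key v)%N.
  apply: Hm; case: HP => HP; apply: (@sub_nodes _ _ HP); by rewrite /= !(inE, mem_cat, tval_in, orbT).
have HPv : (key (tval A + tval B + tval S) <= key v)%N.
  case: HP => HP; have := @sub_nodes _ _ HP _ (tval_in _); rewrite /= => /Hm //.
  by rewrite addrC.
exact: (@ar _ _ _ _ H1 H2 H3 HS HPv r1 r2).
Qed.
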